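(* Let $S$ be a left Fountain-Gould order in an inverse semigroup $Q$. Then $S$ is a straight left I-order in $Q$.
   Context: For $a$ in a semigroup $Q$ lying in a subgroup of $Q$, $a^{\sharp}$ denotes its inverse in the maximal subgroup containing it; in an inverse semigroup $a^{-1}$ denotes the unique inverse of $a$. An element $a$ of a semigroup $S$ is square-cancellable if $a\,\mathcal{H}^*\,a^2$, i.e. for all $x,y\in S^1$, $xa=ya\Leftrightarrow xa^2=ya^2$ and $ax=ay\Leftrightarrow a^2x=a^2y$. A subsemigroup $S$ of a semigroup $Q$ is a left Fountain-Gould order in $Q$ if every $q\in Q$ can be written $q=a^{\sharp}b$ with $a,b\in S$ and $a$ lying in a subgroup of $Q$, and every square-cancellable element of $S$ lies in a subgroup of $Q$. A subsemigroup $S$ of an inverse semigroup $Q$ is a straight left I-order in $Q$ if every $q\in Q$ can be written $q=a^{-1}b$ with $a,b\in S$ and $a\,\mathcal{R}\,b$ in $Q$. *)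

(* Defs.v *)
Section Semigroups.
Variable Q : Type.
Variable mul : Q -> Q -> Q.

Definition associative_op : Prop :=
  forall x y z, mul x (mul y z) = mul (mul x y) z.

Definition is_inverse (a x : Q) : Prop :=
  mul (mul a x) a = a /\ mul (mul x a) x = x.

Definition inverse_semigroup : Prop :=
  forall a, exists x, is_inverse a x /\ forall y, is_inverse a y -> y = x.

Definition subsemigroup (S : Q -> Prop) : Prop :=
  forall x y, S x -> S y -> S (mul x y).

Definition subgroup_with (H : Q -> Prop) (e : Q) : Prop :=
  H e /\
  (forall x y, H x -> H y -> H (mul x y)) /\
  (forall h, H h -> mul e h = h /\ mul h e = h) /\
  (forall h, H h -> exists g, H g /\ mul h g = e /\ mul g h = e).

Definition in_subgroup (a : Q) : Prop :=
  exists H e, subgroup_with H e /\ H a.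

(* x = a^#, the group inverse of a in a subgroup of Q containing a
   (this coincides with its inverse in the maximal subgroup containing a,
   since every subgroup containing a lies in H_a with the same identity) *)
Definition is_sharp (a x : Q) : Prop :=
  exists H e, subgroup_with H e /\ H a /\ H x /\ mul a x = e /\ mul x a = e.

(* Elements of S^1 (resp. Q^1) are represented as option Q, None being the
   adjoined identity 1. *)
Definition lmul1 (x : option Q) (a : Q) : Q :=
  match x with Some x => mul x a | None => a end.
Definition rmul1 (a : Q) (x : option Q) : Q :=
  match x with Some x => mul a x | None => a end.
Definition in1 (S : Q -> Prop) (x : option Q) : Prop :=
  match x with Some x => S x | None => True end.

(* a is square-cancellable in S: a H* a^2 in S *)
Definition square_cancellable (S : Q -> Prop) (a : Q) : Prop :=
  forall x y, in1 S x -> in1 S y ->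
    (lmul1 x a = lmul1 y a <-> lmul1 x (mul a a) = lmul1 y (mul a a)) /\
    (rmul1 a x = rmul1 a y <-> rmul1 (mul a a) x = rmul1 (mul a a) y).

Definition green_R (a b : Q) : Prop :=
  (exists x : option Q, a = rmul1 b x) /\ (exists y : option Q, b = rmul1 a y).

Definition left_FG_order (S : Q -> Prop) : Prop :=
  (forall q, exists a b x, S a /\ S b /\ in_subgroup a /\ is_sharp a x /\
                           q = mul x b) /\
  (forall a, S a -> square_cancellable S a -> in_subgroup a).

Definition straight_left_I_order (S : Q -> Prop) : Prop :=
  forall q, exists a b x, S a /\ S b /\ green_R a b /\ is_inverse a x /\
                          q = mul x b.

End Semigroups.

(* Main.v *)
Require Import Defs.
From Stdlib Require Import IndefiniteDescription.

Ltac ac HA := repeat rewrite HA; reflexivity.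

Lemma idem_comm (Q:Type) (mul:Q->Q->Q) (HA: associative_op Q mul)
  (HI: inverse_semigroup Q mul) e f :
  mul e e = e -> mul f f = f -> mul e f = mul f e.
Proof.
  intros Ee Ef.
  assert (Hidem : forall e f, mul e e = e -> mul f f = f ->
            mul (mul e f) (mul e f) = mul e f).
  { clear e f Ee Ef. intros e f Ee Ef.
    destruct (HI (mul e f)) as [x [[Hx1 Hx2] Hu]].
    assert (Hfxe : mul (mul f x) e = x).
    { apply Hu. split.
      - transitivity (mul (mul (mul e (mul f f)) x) (mul (mul e e) f)); [ac HA|].
        rewrite Ee, Ef. exact Hx1.
      - transitivity (mul (mul f (mul (mul x (mul e e)) (mul (mul f f) x))) e); [ac HA|].
        rewrite Ee, Ef.
        transitivity (mul (mul f (mul (mul x (mul e f)) x)) e); [ac HA|].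
        rewrite Hx2. reflexivity. }
    assert (Exx: mul x x = x).
    { transitivity (mul (mul (mul f x) e) (mul (mul f x) e)); [rewrite Hfxe; reflexivity|].
      transitivity (mul (mul f (mul (mul x (mul e f)) x)) e); [ac HA|].
      rewrite Hx2. exact Hfxe. }
    destruct (HI x) as [z [_ Hz]].
    assert (H1 : mul e f = z) by (apply Hz; split; assumption).
    assert (H2 : x = z) by (apply Hz; split; rewrite Exx; exact Exx).
    assert (Hefx : mul e f = x) by congruence.
    rewrite Hefx. exact Exx. }
  destruct (HI (mul e f)) as [x [_ Hu]].
  assert (H1: mul e f = x).
  { apply Hu; split; rewrite (Hidem e f Ee Ef); apply Hidem; auto. }
  assert (H2: mul f e = x).
  { apply Hu. split.
    - transitivity (mul (mul (mul e (mul f f)) (mul e e)) f); [ac HA|].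
      rewrite Ee, Ef. transitivity (mul (mul e f) (mul e f)); [ac HA|].
      apply Hidem; auto.
    - transitivity (mul (mul (mul f (mul e e)) (mul f f)) e); [ac HA|].
      rewrite Ee, Ef. transitivity (mul (mul f e) (mul f e)); [ac HA|].
      apply Hidem; auto. }
  congruence.
Qed.

Definition inv (Q:Type) (mul:Q->Q->Q) (HI : inverse_semigroup Q mul) (a:Q) : Q :=
  proj1_sig (constructive_indefinite_description _ (HI a)).

Lemma inv_spec (Q:Type) (mul:Q->Q->Q) (HI : inverse_semigroup Q mul) a :
  is_inverse Q mul a (inv Q mul HI a) /\
  forall y, is_inverse Q mul a y -> y = inv Q mul HI a.
Proof.
  unfold inv. destruct (constructive_indefinite_description _ _) as [x Hx]. exact Hx.
Qed.

Theorem lemma2p2 (Q : Type) (mul : Q -> Q -> Q) (S : Q -> Prop) :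
  associative_op Q mul ->
  inverse_semigroup Q mul ->
  subsemigroup Q mul S ->
  left_FG_order Q mul S ->
  straight_left_I_order Q mul S.
Proof.
  intros HA HI HS [HQ _].
  set (i := inv Q mul HI).
  assert (Hi1 : forall a, mul (mul a (i a)) a = a) by (intro a; destruct (inv_spec Q mul HI a) as [[h1 h2] h3]; exact h1).
  assert (Hi2 : forall a, mul (mul (i a) a) (i a) = i a) by (intro a; destruct (inv_spec Q mul HI a) as [[h1 h2] h3]; exact h2).
  assert (Hiu : forall a y, is_inverse Q mul a y -> y = i a) by (intro a; destruct (inv_spec Q mul HI a) as [[h1 h2] h3]; exact h3).
  clearbody i.
  pose proof (idem_comm Q mul HA HI) as Hcomm.
  assert (E1 : forall z, mul (mul z (i z)) (mul z (i z)) = mul z (i z)).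
  { intro z. transitivity (mul (mul (mul z (i z)) z) (i z)); [ac HA|]. rewrite Hi1; reflexivity. }
  assert (E2 : forall z, mul (mul (i z) z) (mul (i z) z) = mul (i z) z).
  { intro z. transitivity (mul (mul (mul (i z) z) (i z)) z); [ac HA|]. rewrite Hi2; reflexivity. }
  assert (Hprod : forall x y, i (mul x y) = mul (i y) (i x)).
  { intros x y. symmetry; apply Hiu; split.
    - transitivity (mul (mul x (mul (mul y (i y)) (mul (i x) x))) y); [ac HA|].
      rewrite (Hcomm _ _ (E1 y) (E2 x)).
      transitivity (mul (mul (mul x (i x)) x) (mul (mul y (i y)) y)); [ac HA|].
      rewrite (Hi1 x), (Hi1 y). reflexivity.
    - transitivity (mul (mul (i y) (mul (mul (i x) x) (mul y (i y)))) (i x)); [ac HA|].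
      rewrite <- (Hcomm _ _ (E1 y) (E2 x)).
      transitivity (mul (mul (mul (i y) y) (i y)) (mul (mul (i x) x) (i x))); [ac HA|].
      rewrite (Hi2 x), (Hi2 y). reflexivity. }
  assert (Hidinv : forall f, mul f f = f -> i f = f).
  { intros f Hf. symmetry; apply Hiu; split; rewrite Hf; exact Hf. }
  intro q.
  destruct (HQ q) as (a & b & x & Sa & Sb & _ & (H & e & (He & Hcl & Hid & _) & Ha & Hx & Hax & Hxa) & Hq).
  destruct (Hid a Ha) as [Hea Hae]. destruct (Hid x Hx) as [Hex Hxe].
  assert (Hee : mul e e = e) by (apply (Hid e He)).
  assert (Hxi : x = i a) by (apply Hiu; split; [rewrite Hax; exact Hea | rewrite Hxa; exact Hex]).
  assert (SB : S (mul a b)) by (apply HS; auto).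
  assert (F1 : i (mul a a) = mul x x) by (rewrite Hprod, <- Hxi; reflexivity).
  assert (F2 : mul (mul a a) (mul x x) = e).
  { transitivity (mul (mul a (mul a x)) x); [ac HA|]. rewrite Hax, Hae, Hax. reflexivity. }
  assert (F3 : q = mul (mul x x) (mul a b)).
  { rewrite Hq. symmetry. transitivity (mul (mul x (mul x a)) b); [ac HA|].
    rewrite Hxa, Hxe. reflexivity. }
  assert (F4 : mul e (mul a b) = mul a b) by (rewrite HA, Hea; reflexivity).
  set (A := mul a a) in *. set (X := mul x x) in *. set (B := mul a b) in *.
  clearbody A X B. clear Hq Hxi Hx Ha Hxe Hex Hae Hea Hax Hxa Sa Sb.
  set (f := mul B (i B)).
  assert (HBf : mul B (i B) = f) by reflexivity.
  assert (Ef : mul f f = f) by apply E1.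
  assert (HfB : mul f B = B) by apply Hi1.
  assert (Hef : mul e f = f) by (unfold f; rewrite HA, F4; reflexivity).
  assert (Hfe : mul f e = f) by (rewrite <- (Hcomm e f Hee Ef); exact Hef).
  clearbody f.
  set (t := mul f A).
  assert (Hit : i t = mul X f) by (unfold t; rewrite Hprod, (Hidinv f Ef), F1; reflexivity).
  assert (Htt : mul t (i t) = f).
  { rewrite Hit. unfold t.
    transitivity (mul (mul f (mul A X)) f); [ac HA|].
    rewrite F2, Hfe, Ef. reflexivity. }
  clearbody t.
  destruct (HQ t) as (u & v & y & Su & Sv & _ & (H2 & g & (Hg & _ & Hid2 & _) & Hu & Hy & Huy & Hyu) & Ht).
  destruct (Hid2 u Hu) as [Hgu Hug]. destruct (Hid2 y Hy) as [Hgy Hyg].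
  assert (Hgg : mul g g = g) by (apply (Hid2 g Hg)).
  assert (Hyi : y = i u) by (apply Hiu; split; [rewrite Huy; exact Hgu | rewrite Hyu; exact Hgy]).
  assert (HcA : mul u v = mul (mul u u) t).
  { rewrite Ht. symmetry. transitivity (mul (mul u (mul u y)) v); [ac HA|].
    rewrite Huy, Hug. reflexivity. }
  assert (Hiuu : i (mul u u) = mul y y) by (rewrite Hprod, <- Hyi; reflexivity).
  assert (Hht : mul (mul (i (mul u u)) (mul u u)) t = t).
  { rewrite Hiuu, Ht.
    transitivity (mul (mul y (mul (mul y u) (mul u y))) v); [ac HA|].
    rewrite Hyu, Huy, Hgg, Hyg. reflexivity. }
  assert (Hhf : mul (mul (i (mul u u)) (mul u u)) f = f).
  { rewrite <- Htt at 1. rewrite HA, Hht. exact Htt. }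
  assert (Hfh : mul f (mul (i (mul u u)) (mul u u)) = f).
  { rewrite <- (Hcomm _ f (E2 (mul u u)) Ef). exact Hhf. }
  assert (Hcc : mul (mul u v) (i (mul u v)) = mul (mul (mul u u) B) (i (mul (mul u u) B))).
  { rewrite HcA, (Hprod (mul u u) t), (Hprod (mul u u) B).
    transitivity (mul (mul (mul u u) (mul t (i t))) (i (mul u u))); [ac HA|].
    rewrite Htt, <- HBf. ac HA. }
  assert (HC : q = mul (i (mul u v)) (mul (mul u u) B)).
  { rewrite HcA, Hprod, Hit, F3. symmetry.
    transitivity (mul (mul X (mul f (mul (i (mul u u)) (mul u u)))) B); [ac HA|].
    rewrite Hfh, <- HA, HfB. reflexivity. }
  exists (mul u v), (mul (mul u u) B), (i (mul u v)).
  split; [apply HS; auto|].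
  split; [apply HS; [apply HS; auto | auto]|].
  split.
  { split.
    - exists (Some (mul (i (mul (mul u u) B)) (mul u v))). simpl.
      rewrite (HA (mul (mul u u) B) (i (mul (mul u u) B)) (mul u v)), <- Hcc, Hi1.
      reflexivity.
    - exists (Some (mul (i (mul u v)) (mul (mul u u) B))). simpl.
      rewrite (HA (mul u v) (i (mul u v)) (mul (mul u u) B)), Hcc, Hi1.
      reflexivity. }
  split; [split; [apply Hi1 | apply Hi2]|].
  exact HC.
Qed.
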